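(* Let $T$ be a graph on a countably infinite set $X$ with bounded degree, $\mu$ a $T$-invariant mean on $X$ with associated measure $\bar\mu$ on $\beta X$, and let $W$ be a subgraph of $T$ with $V(W)=X$. Then for every integer $l\ge1$, the $\mu$-measure of the set of points $x\in X$ whose connected component in $W$ has exactly $l$ vertices equals the $\bar\mu$-measure of the set of points $\omega\in\beta X$ whose connected component in $\mathcal G(W)$ has exactly $l$ vertices.
   Context: A mean on $X$ is a finitely additive $\mu:2^X\to[0,1]$ with $\mu(X)=1$; $\bar\mu$ is the unique regular Borel probability on $\beta X$ (the ultrafilters on $X$) with $\bar\mu(U_A)=\mu(A)$ where $U_A=\{\omega:A\in\omega\}$. A mean is $T$-invariant if it is invariant under some (equivalently every) action of a finitely generated group on $X$ whose Schreier graph with respect to a finite symmetric generating set is $T$ (Schreier graph: edge $\{x,y\}$ when $x\neq y$ and $s(x)=y$ for a generator $s$). For a bounded degree graph $W$ on $X$, $\mathcal G(W)$ is the graph on $\beta X$ with an edge $\{\omega,\omega'\}$ when $\omega\neq\omega'$ and $\tilde s(\omega)=\omega'$ for a generator $s$ of some finitely generated group action on $X$ with Schreier graph $W$, where $\tilde s(\omega)=\{s(A):A\in\omega\}$; this does not depend on the chosen action. *)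

(* Defs.v *)
From Stdlib Require Import Reals List Relations.
Open Scope R_scope.

Set Implicit Arguments.

Definition set (A : Type) := A -> Prop.

Definition image {X : Type} (s : X -> X) (A : set X) : set X :=
  fun y => exists x, A x /\ s x = y.

Definition countably_infinite (X : Type) : Prop :=
  exists f : nat -> X, (forall n m, f n = f m -> n = m) /\ (forall x, exists n, f n = x).

Definition is_graph {V : Type} (G : V -> V -> Prop) : Prop :=
  (forall x y, G x y -> G y x) /\ (forall x, ~ G x x).

Definition bounded_degree {V : Type} (G : V -> V -> Prop) : Prop :=
  exists d : nat, forall x, exists ys : list V,
    (length ys <= d)%nat /\ forall y, G x y -> In y ys.

Definition has_card {V : Type} (P : set V) (l : nat) : Prop :=
  exists xs : list V, length xs = l /\ NoDup xs /\ forall y, In y xs <-> P y.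

Definition component {V : Type} (G : V -> V -> Prop) (v : V) : set V :=
  fun w => clos_refl_trans V G v w.

(* The action of a finitely generated group with finite symmetric generating
   set S on X is recorded by the list of the permutations of X induced by the
   elements of S; symmetry: the inverse of each generator is a generator. *)
Definition sym_gens {X : Type} (gens : list (X -> X)) : Prop :=
  forall s, In s gens -> exists t, In t gens /\
    (forall x, t (s x) = x) /\ (forall x, s (t x) = x).

Definition schreier {X : Type} (gens : list (X -> X)) (x y : X) : Prop :=
  x <> y /\ exists s, In s gens /\ s x = y.

Definition action_with_schreier {X : Type} (gens : list (X -> X))
  (G : X -> X -> Prop) : Prop :=
  sym_gens gens /\ forall x y, G x y <-> schreier gens x y.

Definition is_mean {X : Type} (mu : set X -> R) : Prop :=
  (forall A, 0 <= mu A <= 1) /\ mu (fun _ => True) = 1 /\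
  (forall A B, (forall x, ~ (A x /\ B x)) ->
      mu (fun x => A x \/ B x) = mu A + mu B).

Definition invariant_under {X : Type} (mu : set X -> R) (gens : list (X -> X)) : Prop :=
  forall s, In s gens -> forall A, mu (image s A) = mu A.

Definition T_invariant {X : Type} (T : X -> X -> Prop) (mu : set X -> R) : Prop :=
  exists gens, action_with_schreier gens T /\ invariant_under mu gens.

Definition is_ultrafilter {X : Type} (U : set (set X)) : Prop :=
  U (fun _ => True) /\ ~ U (fun _ => False) /\
  (forall A B, U A -> (forall x, A x -> B x) -> U B) /\
  (forall A B, U A -> U B -> U (fun x => A x /\ B x)) /\
  (forall A, U A \/ U (fun x => ~ A x)).

Definition beta (X : Type) := { U : set (set X) | is_ultrafilter U }.

Definition UA {X : Type} (A : set X) : set (beta X) := fun w => proj1_sig w A.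

Definition is_open {X : Type} (O : set (beta X)) : Prop :=
  forall w, O w -> exists A, proj1_sig w A /\ forall w', UA A w' -> O w'.

Definition is_closed {X : Type} (C : set (beta X)) : Prop :=
  is_open (fun w => ~ C w).

Inductive borel {X : Type} : set (beta X) -> Prop :=
| borel_open : forall O, is_open O -> borel O
| borel_compl : forall E, borel E -> borel (fun w => ~ E w)
| borel_union : forall E : nat -> set (beta X), (forall n, borel (E n)) ->
    borel (fun w => exists n, E n w).

Definition subset {V : Type} (A B : set V) : Prop := forall x, A x -> B x.

Definition is_glb (P : R -> Prop) (m : R) : Prop :=
  (forall r, P r -> m <= r) /\ (forall b, (forall r, P r -> b <= r) -> b <= m).

(* regular Borel probability measure on beta X (values on non-Borel sets
   are irrelevant) *)
Definition regular_borel_prob {X : Type} (m : set (beta X) -> R) : Prop :=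
  (forall E, borel E -> 0 <= m E) /\
  m (fun _ => True) = 1 /\
  (forall E : nat -> set (beta X), (forall n, borel (E n)) ->
     (forall i j w, E i w -> E j w -> i = j) ->
     infinite_sum (fun n => m (E n)) (m (fun w => exists n, E n w))) /\
  (forall E, borel E ->
     is_glb (fun r => exists O, is_open O /\ subset E O /\ r = m O) (m E) /\
     is_lub (fun r => exists C, is_closed C /\ subset C E /\ r = m C) (m E)).

Definition is_bar_mean {X : Type} (mu : set X -> R) (m : set (beta X) -> R) : Prop :=
  regular_borel_prob m /\ forall A, m (UA A) = mu A.

Definition tilde_is {X : Type} (s : X -> X) (w w' : beta X) : Prop :=
  forall B, proj1_sig w' B <->
    exists A, proj1_sig w A /\ forall y, B y <-> image s A y.

Definition GW {X : Type} (W : X -> X -> Prop) (w w' : beta X) : Prop :=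
  w <> w' /\ exists gens, action_with_schreier gens W /\
    exists s, In s gens /\ tilde_is s w w'.

(* Main.v *)
Require Import Defs.
From Stdlib Require Import Reals List Relations Arith Lia Classical ClassicalEpsilon FunctionalExtensionality PropExtensionality ProofIrrelevance.

Section UF.
Context {X : Type}.

Lemma uf_mono (w : beta X) (A B : set X) : proj1_sig w A -> (forall x, A x -> B x) -> proj1_sig w B.
Proof. destruct w as [U [H1 [H2 [H3 [H4 H5]]]]]; simpl; eauto. Qed.

Lemma uf_and (w : beta X) (A B : set X) : proj1_sig w A -> proj1_sig w B -> proj1_sig w (fun x => A x /\ B x).
Proof. destruct w as [U [H1 [H2 [H3 [H4 H5]]]]]; simpl; eauto. Qed.

Lemma uf_em (w : beta X) (A : set X) : proj1_sig w A \/ proj1_sig w (fun x => ~ A x).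
Proof. destruct w as [U [H1 [H2 [H3 [H4 H5]]]]]; simpl; eauto. Qed.

Lemma uf_true (w : beta X) : proj1_sig w (fun _ => True).
Proof. destruct w as [U [H1 [H2 [H3 [H4 H5]]]]]; simpl; eauto. Qed.

Lemma uf_nonempty (w : beta X) (A : set X) : proj1_sig w A -> exists x, A x.
Proof.
  intros HA. apply NNPP; intro Hn.
  destruct w as [U [H1 [H2 [H3 [H4 H5]]]]]; simpl in *.
  apply H2. apply (H3 A); auto. intros x Hx; apply Hn; eauto.
Qed.

Lemma uf_all (w : beta X) (A : set X) : (forall x, A x) -> proj1_sig w A.
Proof. intros H. apply (uf_mono w (fun _ => True)); auto using uf_true. Qed.

Lemma uf_fin_or {I : Type} (L : list I) (w : beta X) (P : I -> set X) :
  proj1_sig w (fun x => exists i, In i L /\ P i x) -> exists i, In i L /\ proj1_sig w (P i).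
Proof.
  induction L as [|a L IH]; intros H.
  - destruct (uf_nonempty w _ H) as [x [i [[] _]]].
  - destruct (uf_em w (P a)) as [Ha|Ha].
    + exists a; simpl; auto.
    + destruct IH as [i [Hi Hp]].
      * apply (uf_mono w _ _ (uf_and w _ _ H Ha)).
        intros x [[i [[<-|Hi] Hp]] Hn]; [contradiction|eauto].
      * exists i; simpl; auto.
Qed.

Lemma uf_fin_and {I : Type} (L : list I) (w : beta X) (P : I -> set X) :
  (forall i, In i L -> proj1_sig w (P i)) -> proj1_sig w (fun x => forall i, In i L -> P i x).
Proof.
  induction L as [|a L IH]; intros H.
  - apply uf_all; intros x i [].
  - apply (uf_mono w _ _ (uf_and w _ _ (H a (or_introl eq_refl)) (IH (fun i Hi => H i (or_intror Hi))))).
    intros x [H1 H2] i [<-|Hi]; auto.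
Qed.

Lemma beta_ext (w1 w2 : beta X) : (forall B, proj1_sig w1 B <-> proj1_sig w2 B) -> w1 = w2.
Proof.
  destruct w1 as [U1 P1], w2 as [U2 P2]; simpl; intros H.
  assert (U1 = U2) by (apply functional_extensionality; intro B; apply propositional_extensionality; auto).
  subst. f_equal. apply proof_irrelevance.
Qed.

Lemma uf_incl_eq (w1 w2 : beta X) : (forall B, proj1_sig w1 B -> proj1_sig w2 B) -> w1 = w2.
Proof.
  intros H; apply beta_ext; intro B; split; auto.
  intros H2. destruct (uf_em w1 B) as [H1|H1]; auto.
  apply H in H1. destruct (uf_nonempty w2 _ (uf_and w2 _ _ H2 H1)) as [x [a b]]; contradiction.
Qed.

Definition push (f : X -> X) (w : beta X) : beta X.
Proof.
  refine (exist _ (fun B => proj1_sig w (fun x => B (f x))) _).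
  destruct w as [U [H1 [H2 [H3 [H4 H5]]]]]; simpl.
  split; [exact H1|split; [exact H2|split; [|split]]].
  - intros A B HA HB; apply (H3 _ _ HA); auto.
  - intros A B HA HB; apply (H4 _ _ HA HB).
  - intros A. apply (H5 (fun x => A (f x))).
Defined.

Lemma push_spec f w B : proj1_sig (push f w) B <-> proj1_sig w (fun x => B (f x)).
Proof. reflexivity. Qed.

Lemma push_ext f g w : proj1_sig w (fun x => f x = g x) -> push f w = push g w.
Proof.
  intros H; apply uf_incl_eq; intros B HB; simpl in *.
  apply (uf_mono w _ _ (uf_and w _ _ H HB)). intros x [<- Hb]; auto.
Qed.

Lemma push_comp s f w : push s (push f w) = push (fun x => s (f x)) w.
Proof. apply beta_ext; intro B; simpl; tauto. Qed.

Lemma push_id w : push (fun x => x) w = w.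
Proof. apply beta_ext; intro B; destruct w; simpl; tauto. Qed.

Lemma push_neq f g w (S : set X) : proj1_sig w (fun x => S (f x)) -> proj1_sig w (fun x => ~ S (g x)) -> push f w <> push g w.
Proof.
  intros H1 H2 E. assert (H3 : proj1_sig (push g w) S) by (rewrite <- E; exact H1).
  simpl in H3. destruct (uf_nonempty w _ (uf_and w _ _ H3 H2)) as [x [a b]]; contradiction.
Qed.

Lemma tilde_push_eq s w w' : tilde_is s w w' -> w' = push s w.
Proof.
  intros H; apply uf_incl_eq; intros B HB. apply H in HB. destruct HB as [A [HA HAB]].
  simpl. apply (uf_mono w _ _ HA). intros x Hx. apply HAB. exists x; auto.
Qed.

Lemma tilde_push s t w : (forall y, s (t y) = y) -> tilde_is s w (push s w).
Proof.
  intros Hst B; simpl; split.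
  - intros HB. exists (fun x => B (s x)); split; auto.
    intros y; split.
    + intros Hy. exists (t y). rewrite Hst; auto.
    + intros [x [Hx <-]]; auto.
  - intros [A [HA HAB]]. apply (uf_mono w _ _ HA). intros x Hx. apply HAB. exists x; auto.
Qed.

End UF.

Section Graph.
Context {X : Type} (W : X -> X -> Prop).
Hypothesis Wsym : forall x y, W x y -> W y x.
Hypothesis Wirr : forall x, ~ W x x.

Fixpoint Rn (n : nat) (x y : X) : Prop :=
  match n with 0 => x = y | S n => Rn n x y \/ exists z, Rn n x z /\ W z y end.

Lemma Rn_le n m x y : (n <= m)%nat -> Rn n x y -> Rn m x y.
Proof. induction 1; simpl; auto. Qed.

Lemma Rn_step_left n x z y : W x z -> Rn n z y -> Rn (S n) x y.
Proof.
  revert y; induction n; intros y Hw H; simpl in *.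
  - subst; right; exists x; auto.
  - destruct H as [H|[u [H1 H2]]].
    + specialize (IHn y Hw H); simpl in IHn; auto.
    + right; exists u; split; auto.
Qed.

Lemma Rn_sym n x y : Rn n x y -> Rn n y x.
Proof.
  revert x y; induction n; intros x y H; simpl in *; auto.
  destruct H as [H|[z [H1 H2]]]; auto.
  apply (Rn_step_left n y z x); auto.
Qed.

Lemma Rn_trans a b x y z : Rn a x y -> Rn b y z -> Rn (a + b) x z.
Proof.
  revert z; induction b; intros z H1 H2; simpl in H2.
  - subst; rewrite Nat.add_0_r; auto.
  - rewrite Nat.add_succ_r; simpl. destruct H2 as [H2|[u [H2 H3]]]; eauto.
Qed.

Lemma Rn_clos n x y : Rn n x y -> clos_refl_trans X W x y.
Proof.
  revert y; induction n; intros y H; simpl in H.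
  - subst; apply rt_refl.
  - destruct H as [H|[z [H1 H2]]]; auto. eapply rt_trans; [apply IHn; eauto| apply rt_step; auto].
Qed.

Section Ball.
Context (nb : X -> list X) (d : nat).
Hypothesis Hnb_len : forall x, (length (nb x) <= d)%nat.
Hypothesis Hnb : forall x y, W x y -> In y (nb x).

Fixpoint ball (n : nat) (y : X) : list X :=
  match n with 0 => y :: nil | S n => ball n y ++ flat_map nb (ball n y) end.

Lemma ball_in n y z : Rn n y z -> In z (ball n y).
Proof.
  revert z; induction n; intros z H; simpl in *.
  - auto.
  - apply in_or_app. destruct H as [H|[u [H1 H2]]]; auto.
    right; apply in_flat_map; eauto.
Qed.

Lemma flat_map_len (L : list X) : (length (flat_map nb L) <= length L * d)%nat.
Proof.
  induction L; simpl; auto. rewrite length_app. specialize (Hnb_len a). lia.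
Qed.

Lemma ball_len n y : (length (ball n y) <= (S d) ^ n)%nat.
Proof.
  induction n; simpl; auto. rewrite length_app. pose proof (flat_map_len (ball n y)). nia.
Qed.

Section Color.
Context (e : nat -> X) (idx : X -> nat).
Hypothesis He : forall x, e (idx x) = x.
Context (R : nat).
Definition K := S ((S d) ^ R).

Definition newc (n : nat) (prev : list nat) : nat :=
  epsilon (inhabits 0%nat) (fun k => (k < K)%nat /\ ~ In k (map (fun y => nth (idx y) prev 0%nat) (ball R (e n)))).

Lemma newc_spec n prev : (newc n prev < K)%nat /\ ~ In (newc n prev) (map (fun y => nth (idx y) prev 0%nat) (ball R (e n))).
Proof.
  unfold newc; apply epsilon_spec. apply NNPP; intro Hn.
  set (F := map (fun y => nth (idx y) prev 0%nat) (ball R (e n))).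
  assert (Hinc : incl (seq 0 K) F).
  { intros k Hk. apply in_seq in Hk. apply NNPP; intro Hk2. apply Hn; exists k; split; [lia|auto]. }
  pose proof (NoDup_incl_length (seq_NoDup K 0) Hinc). rewrite length_seq in H.
  unfold F in H; rewrite length_map in H. pose proof (ball_len R (e n)). unfold K in H. lia.
Qed.

Fixpoint col_list (n : nat) : list nat :=
  match n with 0 => nil | S n => col_list n ++ newc n (col_list n) :: nil end.

Definition col n := newc n (col_list n).

Lemma col_list_len n : length (col_list n) = n.
Proof. induction n; simpl; auto. rewrite length_app; simpl; lia. Qed.

Lemma col_list_nth m n : (m < n)%nat -> nth m (col_list n) 0%nat = col m.
Proof.
  induction n; intros H; [lia|]. simpl.
  destruct (Nat.eq_dec m n).
  - subst. rewrite app_nth2; rewrite col_list_len; [|lia]. rewrite Nat.sub_diag; reflexivity.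
  - rewrite app_nth1; [|rewrite col_list_len; lia]. apply IHn; lia.
Qed.

Definition c x := col (idx x).

Lemma c_lt x : (c x < K)%nat.
Proof. apply newc_spec. Qed.

Lemma c_aux y z : (idx z < idx y)%nat -> Rn R y z -> c y <> c z.
Proof.
  intros Hlt HR Heq. destruct (newc_spec (idx y) (col_list (idx y))) as [_ Hn].
  apply Hn. rewrite He. apply in_map_iff. exists z; split; [|apply ball_in; auto].
  rewrite col_list_nth; auto.
Qed.

Lemma c_prop y z : y <> z -> Rn R y z -> c y <> c z.
Proof.
  intros Hne HR. destruct (lt_eq_lt_dec (idx z) (idx y)) as [[H|H]|H].
  - apply c_aux; auto.
  - exfalso; apply Hne. rewrite <- (He y), <- (He z); congruence.
  - intro E; symmetry in E; revert E; apply c_aux; auto. apply Rn_sym; auto.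
Qed.

Hypothesis HR2 : (2 <= R)%nat.

Lemma c_adj x y : W x y -> c x <> c y.
Proof.
  intros H. apply c_prop. intro E; subst; eapply Wirr; eauto.
  apply (Rn_le 1); [lia|]. simpl; right; exists x; auto.
Qed.

Lemma c_uniq x y z : W x y -> W x z -> c y = c z -> y = z.
Proof.
  intros H1 H2 E. apply NNPP; intro Hne. apply (c_prop y z Hne); auto.
  apply (Rn_le 2); [lia|]. apply (Rn_trans 1 1 y x z).
  - simpl; right; exists y; auto.
  - simpl; right; exists x; auto.
Qed.

Definition Qab a b x y := (c x = a /\ W x y /\ c y = b) \/ (c x = b /\ W x y /\ c y = a).

Definition sigma a b x : X :=
  epsilon (inhabits x) (fun y => Qab a b x y \/ (~ (exists y', Qab a b x y') /\ y = x)).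

Lemma sigma_spec a b x : Qab a b x (sigma a b x) \/ (~ (exists y', Qab a b x y') /\ sigma a b x = x).
Proof.
  unfold sigma; apply epsilon_spec.
  destruct (classic (exists y', Qab a b x y')) as [[y Hy]|Hn]; eauto.
Qed.

Lemma Qab_W a b x y : Qab a b x y -> W x y.
Proof. unfold Qab; intuition. Qed.

Lemma Qab_same a b x y z : Qab a b x y -> Qab a b x z -> y = z.
Proof.
  intros H1 H2. apply (c_uniq x); [eapply Qab_W; eauto|eapply Qab_W; eauto|].
  unfold Qab in *; destruct H1 as [[? [? ?]]|[? [? ?]]]; destruct H2 as [[? [? ?]]|[? [? ?]]]; congruence.
Qed.

Lemma sigma_inv a b x : sigma a b (sigma a b x) = x.
Proof.
  destruct (sigma_spec a b x) as [H|[Hn E]].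
  - set (y := sigma a b x) in *.
    assert (Hyx : Qab a b y x).
    { unfold Qab in *; destruct H as [[? [? ?]]|[? [? ?]]]; [right|left]; auto. }
    destruct (sigma_spec a b y) as [H2|[Hn2 _]].
    + eapply Qab_same; eauto.
    + exfalso; eauto.
  - rewrite E, E; auto.
Qed.

Lemma sigma_move a b x : sigma a b x <> x -> W x (sigma a b x).
Proof.
  intros Hne. destruct (sigma_spec a b x) as [H|[_ E]]; [eapply Qab_W; eauto|contradiction].
Qed.

Lemma sigma_hit x y : W x y -> sigma (c x) (c y) x = y.
Proof.
  intros H. assert (Hq : Qab (c x) (c y) x y) by (left; auto).
  destruct (sigma_spec (c x) (c y) x) as [H2|[Hn _]].
  - eapply Qab_same; eauto.
  - exfalso; eauto.
Qed.

Definition G0 : list (X -> X) :=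
  flat_map (fun a => map (fun b => sigma a b) (seq 0 K)) (seq 0 K).

Lemma G0_in s : In s G0 -> exists a b, s = sigma a b.
Proof.
  unfold G0; intros H. apply in_flat_map in H. destruct H as [a [_ H]].
  apply in_map_iff in H. destruct H as [b [<- _]]; eauto.
Qed.

Lemma G0_has x y : W x y -> In (sigma (c x) (c y)) G0.
Proof.
  intros H. unfold G0. apply in_flat_map. exists (c x); split; [apply in_seq; pose proof (c_lt x); lia|].
  apply in_map_iff. exists (c y); split; auto. apply in_seq; pose proof (c_lt y); lia.
Qed.

Lemma G0_action : action_with_schreier G0 W.
Proof.
  split.
  - intros s Hs. exists s; split; auto. destruct (G0_in s Hs) as [a [b ->]].
    split; intro; apply sigma_inv.
  - intros x y; split.
    + intros H. split; [intro E; subst; eapply Wirr; eauto|].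
      exists (sigma (c x) (c y)); split; [apply G0_has; auto|apply sigma_hit; auto].
    + intros [Hne [s [Hs E]]]. destruct (G0_in s Hs) as [a [b ->]]. subst y.
      apply sigma_move; auto.
Qed.

End Color.
End Ball.
End Graph.



Lemma NoDup_firstn' {A : Type} (n : nat) (L : list A) : NoDup L -> NoDup (firstn n L).
Proof.
  intros H. rewrite <- (firstn_skipn n L) in H. eapply NoDup_app_remove_r; eauto.
Qed.

Lemma exists_max (Q : nat -> Prop) (B : nat) : Q 0%nat -> (forall n, Q n -> (n <= B)%nat) ->
  exists n, Q n /\ forall m, Q m -> (m <= n)%nat.
Proof.
  revert Q; induction B; intros Q H0 HB.
  - exists 0%nat; split; auto.
  - destruct (classic (Q (S B))) as [H|H].
    + exists (S B); auto.
    + apply IHB; auto. intros n Hn. specialize (HB n Hn).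
      destruct (Nat.eq_dec n (S B)); [subst; contradiction|lia].
Qed.

Lemma card_le {V : Type} (P : set V) m L : has_card P m -> NoDup L -> (forall y, In y L -> P y) -> (length L <= m)%nat.
Proof.
  intros [xs [Hl [Hn Hi]]] HN HL. subst. apply NoDup_incl_length; auto.
  intros y Hy; apply Hi; auto.
Qed.

Lemma card_unique {V : Type} (P : set V) m k : has_card P m -> has_card P k -> m = k.
Proof.
  intros H1 H2. pose proof H1 as [xs [Hl [Hn Hi]]]. pose proof H2 as [ys [Hl2 [Hn2 Hi2]]].
  pose proof (card_le P k xs H2 Hn (fun y Hy => proj1 (Hi y) Hy)).
  pose proof (card_le P m ys H1 Hn2 (fun y Hy => proj1 (Hi2 y) Hy)). lia.
Qed.

Section Main.
Context {X : Type} (W : X -> X -> Prop).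
Hypothesis Wsym : forall x y, W x y -> W y x.
Hypothesis Wirr : forall x, ~ W x x.
Context (l : nat) (G : list (X -> X)).
Hypothesis HG : action_with_schreier G W.
Context (col : X -> nat) (Kc : nat).
Hypothesis Hclt : forall x, (col x < Kc)%nat.
Hypothesis Hcprop : forall y z, y <> z -> Rn W (l + l) y z -> col y <> col z.

Lemma reach n : forall f (w : beta X), proj1_sig w (fun x => Rn W n x (f x)) ->
  clos_refl_trans _ (GW W) w (push f w).
Proof.
  induction n; intros f w H.
  - replace (push f w) with w; [apply rt_refl|].
    rewrite <- (push_id w) at 1. apply push_ext. apply (uf_mono w _ _ H). simpl; auto.
  - set (h := fun x => epsilon (inhabits x) (fun z => Rn W n x z /\ (z = f x \/ W z (f x)))).
    assert (Hh : proj1_sig w (fun x => Rn W n x (h x) /\ (h x = f x \/ W (h x) (f x)))).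
    { apply (uf_mono w _ _ H). intros x Hx. unfold h; apply epsilon_spec.
      simpl in Hx. destruct Hx as [Hx|[z [H1 H2]]]; eauto. }
    assert (IH : clos_refl_trans _ (GW W) w (push h w)).
    { apply IHn. apply (uf_mono w _ _ Hh). tauto. }
    assert (Hs : proj1_sig w (fun x => exists s, In s ((fun y => y) :: G) /\ s (h x) = f x)).
    { apply (uf_mono w _ _ Hh). intros x [_ [E|Hw]].
      - exists (fun y => y); simpl; auto.
      - apply (proj2 HG) in Hw. destruct Hw as [_ [s [Hs E]]]. exists s; simpl; auto. }
    destruct (uf_fin_or _ w _ Hs) as [s0 [Hin Hs0]].
    assert (E : push f w = push s0 (push h w)).
    { rewrite push_comp. apply push_ext. apply (uf_mono w _ _ Hs0). auto. }
    rewrite E. destruct Hin as [<-|Hin].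
    + rewrite push_id; auto.
    + eapply rt_trans; [exact IH|].
      destruct (classic (push h w = push s0 (push h w))) as [Eq|Ne].
      * rewrite <- Eq; apply rt_refl.
      * apply rt_step. split; auto. exists G; split; auto. exists s0; split; auto.
        destruct (proj1 HG s0 Hin) as [t [_ [_ Hst]]].
        eapply tilde_push; eauto.
Qed.

Lemma comp_push (w w' : beta X) : clos_refl_trans _ (GW W) w w' ->
  exists f, (forall x, clos_refl_trans _ W x (f x)) /\ w' = push f w.
Proof.
  intros H. apply clos_rt_rtn1 in H. induction H.
  - exists (fun x => x); split; [intros; apply rt_refl|symmetry; apply push_id].
  - destruct IHclos_refl_trans_n1 as [f [Hf ->]].
    destruct H as [_ [gens [[Hsym Hsch] [s [Hs Ht]]]]].
    apply tilde_push_eq in Ht. subst z. rewrite push_comp.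
    exists (fun x => s (f x)); split; auto.
    intros x. eapply rt_trans; [apply Hf|].
    destruct (classic (s (f x) = f x)) as [E|Ne].
    + rewrite E; apply rt_refl.
    + apply rt_step. apply Hsch. split; auto. eauto.
Qed.

Lemma comp_bound n x : (forall y, clos_refl_trans _ W x y -> Rn W n x y) \/
  (exists L, length L = S n /\ NoDup L /\ forall y, In y L -> Rn W n x y).
Proof.
  induction n.
  - right. exists (x :: nil); split; auto. split; [constructor; auto; constructor|].
    intros y [<-|[]]; simpl; auto.
  - destruct IHn as [H|[L [Hl [Hn Hi]]]].
    + left; intros y Hy; simpl; auto.
    + destruct (classic (exists y, Rn W (S n) x y /\ ~ In y L)) as [[y [Hy Hni]]|Hno].
      * right. exists (y :: L). split; [simpl; auto|]. split; [constructor; auto|].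
        intros z [<-|Hz]; auto. simpl; auto.
      * left. intros y Hy. apply clos_rt_rtn1 in Hy.
        cut (Rn W n x y); [simpl; auto|].
        induction Hy.
        -- apply (Rn_le W 0); [lia|simpl; auto].
        -- apply Hi. apply NNPP; intro Hz. apply Hno. exists z; split; auto.
           simpl; right; eauto.
Qed.

Lemma distinct f g (w : beta X) : proj1_sig w (fun x => Rn W l x (f x) /\ Rn W l x (g x) /\ f x <> g x) ->
  push f w <> push g w.
Proof.
  intros H.
  assert (Ha : proj1_sig w (fun x => exists a, In a (seq 0 Kc) /\ col (f x) = a)).
  { apply uf_all. intros x. exists (col (f x)); split; auto. apply in_seq. specialize (Hclt (f x)); lia. }
  destruct (uf_fin_or _ w _ Ha) as [a [_ Ha2]].
  apply (push_neq f g w (fun y => col y = a)); auto.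
  apply (uf_mono w _ _ (uf_and w _ _ H Ha2)). intros x [[H1 [H2 H3]] H4] E.
  apply (Hcprop (f x) (g x)); auto; [|congruence].
  apply (Rn_trans W l l _ x); auto. apply Rn_sym; auto.
Qed.

Lemma NoDup_map_on {A B : Type} (f : A -> B) (L : list A) :
  (forall a b, In a L -> In b L -> f a = f b -> a = b) -> NoDup L -> NoDup (map f L).
Proof. intros H HN. apply NoDup_map_NoDup_ForallPairs; auto. Qed.

Lemma lemmaA m (w : beta X) : (m <= l)%nat -> proj1_sig w (fun x => has_card (component W x) m) ->
  has_card (component (GW W) w) m.
Proof.
  intros Hm H.
  set (Lx := fun x => epsilon (inhabits nil) (fun L => length L = m /\ NoDup L /\ forall y, In y L <-> component W x y)).
  assert (HL : proj1_sig w (fun x => (length (Lx x) = m /\ NoDup (Lx x) /\ forall y, In y (Lx x) <-> component W x y)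
             /\ forall y, component W x y -> Rn W l x y)).
  { apply (uf_mono w _ _ H). intros x Hx. split.
    - unfold Lx; apply epsilon_spec; exact Hx.
    - destruct (comp_bound l x) as [Hc|[L [Hl [Hn Hi]]]]; auto.
      exfalso. pose proof (card_le _ m L Hx Hn (fun y Hy => Rn_clos W l x y (Hi y Hy))). lia. }
  set (g := fun k x => nth k (Lx x) x).
  assert (Hg : forall k, (k < m)%nat -> proj1_sig w (fun x => Rn W l x (g k x))).
  { intros k Hk. apply (uf_mono w _ _ HL). intros x [[Hl [Hn Hi]] Hr]. apply Hr. apply Hi.
    unfold g; apply nth_In; lia. }
  exists (map (fun k => push (g k) w) (seq 0 m)). split; [rewrite length_map, length_seq; auto|]. split.
  - apply NoDup_map_on; [|apply seq_NoDup].
    intros k j Hk Hj E. apply in_seq in Hk, Hj. apply NNPP; intro Hne. revert E.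
    apply distinct. apply (uf_mono w _ _ (uf_and w _ _ (uf_and w _ _ (Hg k ltac:(lia)) (Hg j ltac:(lia))) HL)).
    intros x [[H1 H2] [[Hl [Hn Hi]] _]]. split; auto. split; auto.
    intro E. apply Hne. unfold g in E. eapply (proj1 (NoDup_nth (Lx x) x)); eauto; lia.
  - intros w'. split.
    + intros Hin. apply in_map_iff in Hin. destruct Hin as [k [<- Hk]]. apply in_seq in Hk.
      apply (reach l). apply Hg; lia.
    + intros Hc. destruct (comp_push w w' Hc) as [f [Hf ->]].
      assert (Hk : proj1_sig w (fun x => exists k, In k (seq 0 m) /\ f x = g k x)).
      { apply (uf_mono w _ _ HL). intros x [[Hl [Hn Hi]] _].
        assert (Hin : In (f x) (Lx x)) by (apply Hi; apply Hf).
        destruct (In_nth _ _ x Hin) as [k [Hk E]]. exists k; split; [apply in_seq; lia|auto]. }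
      destruct (uf_fin_or _ w _ Hk) as [k [Hk1 Hk2]].
      apply in_map_iff. exists k; split; auto. symmetry; apply push_ext; auto.
Qed.

Lemma lemmaB (w : beta X) : proj1_sig w (fun x => exists L, length L = S l /\ NoDup L /\ forall y, In y L -> component W x y) ->
  ~ has_card (component (GW W) w) l.
Proof.
  intros H Hc.
  set (Lx := fun x => epsilon (inhabits nil) (fun L => length L = S l /\ NoDup L /\ forall y, In y L -> Rn W l x y)).
  assert (HL : proj1_sig w (fun x => length (Lx x) = S l /\ NoDup (Lx x) /\ forall y, In y (Lx x) -> Rn W l x y)).
  { apply (uf_mono w _ _ H). intros x [L [Hl [Hn Hi]]]. unfold Lx; apply epsilon_spec.
    destruct (comp_bound l x) as [Hb|Hb]; [|exact Hb]. exists L; split; auto; split; auto. intros y Hy; apply Hb, Hi, Hy. }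
  set (g := fun k x => nth k (Lx x) x).
  assert (Hg : forall k, (k < S l)%nat -> proj1_sig w (fun x => Rn W l x (g k x))).
  { intros k Hk. apply (uf_mono w _ _ HL). intros x [Hl [Hn Hi]]. apply Hi.
    unfold g; apply nth_In; lia. }
  assert (Hle := card_le _ l (map (fun k => push (g k) w) (seq 0 (S l))) Hc).
  rewrite length_map, length_seq in Hle.
  assert (S l <= l)%nat; [|lia]. apply Hle.
  - apply NoDup_map_on; [|apply seq_NoDup].
    intros k j Hk Hj E. apply in_seq in Hk, Hj. apply NNPP; intro Hne. revert E.
    apply distinct. apply (uf_mono w _ _ (uf_and w _ _ (uf_and w _ _ (Hg k ltac:(lia)) (Hg j ltac:(lia))) HL)).
    intros x [[H1 H2] [Hl [Hn Hi]]]. split; auto. split; auto.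
    intro E. apply Hne. unfold g in E. eapply (proj1 (NoDup_nth (Lx x) x)); eauto; lia.
  - intros w' Hin. apply in_map_iff in Hin. destruct Hin as [k [<- Hk]]. apply in_seq in Hk.
    apply (reach l). apply Hg; lia.
Qed.

Lemma main_equiv (w : beta X) : has_card (component (GW W) w) l <-> proj1_sig w (fun x => has_card (component W x) l).
Proof.
  split; [|apply lemmaA; lia].
  intros Hc. destruct (uf_em w (fun x => has_card (component W x) l)) as [H|H]; auto. exfalso.
  set (B2 := fun x => exists L, length L = S l /\ NoDup L /\ forall y, In y L -> component W x y).
  set (B1 := fun x => exists m, In m (seq 0 l) /\ has_card (component W x) m).
  assert (H12 : proj1_sig w (fun x => B1 x \/ B2 x)).
  { apply (uf_mono w _ _ H). intros x Hx. destruct (classic (B2 x)) as [Hb|Hb]; auto. left.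
    set (Q := fun n => exists L, length L = n /\ NoDup L /\ forall y, In y L -> component W x y).
    destruct (exists_max Q l) as [n [[L [Hl [Hn Hi]]] Hmax]].
    - exists nil; split; auto. split; [constructor|]. intros y [].
    - intros n [L [Hl [Hn Hi]]]. apply NNPP; intro Hgt. apply Hb.
      exists (firstn (S l) L). split; [rewrite length_firstn; lia|]. split; [apply NoDup_firstn'; auto|].
      intros y Hy; apply Hi. rewrite <- (firstn_skipn (S l) L). apply in_or_app; auto.
    - exists n. split; [apply in_seq; split; [lia|]|].
      + assert (n <= l)%nat.
        { apply NNPP; intro Hgt. apply Hb.
          exists (firstn (S l) L). split; [rewrite length_firstn; lia|]. split; [apply NoDup_firstn'; auto|].
          intros y Hy; apply Hi. rewrite <- (firstn_skipn (S l) L). apply in_or_app; auto. }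
        destruct (Nat.eq_dec n l); [|simpl; lia]. subst n. exfalso. apply Hx.
        exists L. split; auto. split; auto. intros y; split; auto.
        intros Hy. apply NNPP; intro Hny.
        assert (S (length L) <= length L)%nat; [|lia]. apply Hmax. exists (y :: L). split; [simpl; auto|].
        split; [constructor; auto|]. intros z [<-|Hz]; auto.
      + exists L. split; auto. split; auto. intros y; split; auto.
        intros Hy. apply NNPP; intro Hny.
        assert (S n <= n)%nat; [|lia]. apply Hmax. exists (y :: L). split; [simpl; auto|].
        split; [constructor; auto|]. intros z [<-|Hz]; auto. }
  destruct (uf_em w B2) as [Hb2|Hb2].
  - exact (lemmaB w Hb2 Hc).
  - assert (Hb1 : proj1_sig w B1).
    { apply (uf_mono w _ _ (uf_and w _ _ H12 Hb2)). intros x [[?|?] ?]; tauto. }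
    destruct (uf_fin_or _ w _ Hb1) as [m [Hm Hm2]]. apply in_seq in Hm.
    pose proof (lemmaA m w ltac:(lia) Hm2). pose proof (card_unique _ _ _ Hc H0). lia.
Qed.
End Main.
Open Scope R_scope.

Theorem lemma4p4 (X : Type) (T : X -> X -> Prop) (mu : set X -> R)
  (mbar : set (beta X) -> R) (W : X -> X -> Prop) (l : nat) :
  countably_infinite X ->
  is_graph T -> bounded_degree T ->
  is_mean mu -> T_invariant T mu ->
  is_bar_mean mu mbar ->
  is_graph W -> (forall x y, W x y -> T x y) ->
  (1 <= l)%nat ->
  mu (fun x => has_card (component W x) l) =
  mbar (fun w => has_card (component (GW W) w) l).
Proof.
  intros [e [Hinj Hsurj]] _ [d Hbd] _ _ [_ Hbar] [Wsym Wirr] HWT Hl.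
  set (idx := fun x => epsilon (inhabits 0%nat) (fun n => e n = x)).
  assert (He : forall x, e (idx x) = x) by (intro x; unfold idx; apply epsilon_spec; apply Hsurj).
  set (nb := fun x => epsilon (inhabits nil) (fun ys => (length ys <= d)%nat /\ forall y, T x y -> In y ys)).
  assert (Hnb0 : forall x, (length (nb x) <= d)%nat /\ forall y, T x y -> In y (nb x))
    by (intro x; unfold nb; apply epsilon_spec; apply Hbd).
  assert (Hnb_len : forall x, (length (nb x) <= d)%nat) by (intro x; apply Hnb0).
  assert (Hnb : forall x y, W x y -> In y (nb x)) by (intros x y H; apply Hnb0; auto).
  assert (HR2 : (2 <= l + l)%nat) by lia.
  pose proof (G0_action W Wsym Wirr nb d Hnb_len Hnb e idx He (l + l) HR2) as HG.
  pose proof (fun w => main_equiv W Wsym l _ HG (c nb d e idx (l + l)) (K d (l + l))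
     (fun x => c_lt nb d Hnb_len e idx (l + l) x) (c_prop W Wsym nb d Hnb_len Hnb e idx He (l + l)) w) as Heq.
  rewrite <- Hbar. f_equal. apply functional_extensionality; intro w.
  apply propositional_extensionality. unfold UA. symmetry; apply Heq.
Qed.
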